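(* Let $S$ be an additively cancellative centrally essential semiring. Then every complemented idempotent of $S$ is central, i.e. if $e,f\in S$ satisfy $e^2=e$, $f^2=f$ and $e+f=1$, then $e\in C(S)$.
   Context: A semiring is a set $S$ with two binary operations $+$ and $\cdot$ such that $(S,+)$ is a commutative monoid with neutral element $0$, $(S,\cdot)$ is a monoid with identity $1$, multiplication distributes over addition on both sides, and $0s=s0=0$ for all $s\in S$. The center is $C(S)=\{s\in S: ss'=s's \text{ for all } s'\in S\}$. $S$ is centrally essential if for every non-zero $x\in S$ there exist non-zero $y,z\in C(S)$ with $xy=z$. $S$ is additively cancellative if $x+z=y+z$ implies $x=y$. An idempotent $e$ is complemented if there is an idempotent $f\in S$ with $e+f=1$. *)

(* Defs.v *)
From HB Require Import structures.
From mathcomp Require Import all_boot all_algebra.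
Set Implicit Arguments. Unset Strict Implicit. Unset Printing Implicit Defensive.
Import GRing.Theory.
Local Open Scope ring_scope.

(* Semirings: MathComp's pzSemiRingType (commutative additive monoid, monoid
   multiplication, two-sided distributivity, 0 absorbing; 1 = 0 allowed). *)

Definition central (S : pzSemiRingType) (s : S) : Prop :=
  forall s' : S, s * s' = s' * s.

Definition centrally_essential (S : pzSemiRingType) : Prop :=
  forall x : S, x <> 0 ->
    exists y z : S, [/\ central y, central z, y <> 0, z <> 0 & x * y = z].

Definition add_cancellative (S : pzSemiRingType) : Prop :=
  forall x y z : S, x + z = y + z -> x = y.

(* Main.v *)
Require Import Defs.
From mathcomp Require Import all_boot all_algebra.
Local Open Scope ring_scope.
Import GRing.Theory.

Theorem proposition2p3 (S : pzSemiRingType)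
  (hcanc : add_cancellative S) (hess : centrally_essential S)
  (e f : S) (he : e * e = e) (hf : f * f = f) (hef : e + f = 1) :
  central e.
Proof.
have ef0 : e * f = 0.
  apply: (hcanc _ _ e); rewrite add0r -{2}he addrC -mulrDr hef mulr1 //.
have fe0 : f * e = 0.
  apply: (hcanc _ _ e); rewrite add0r -{2}he -mulrDl addrC hef mul1r //.
have key : forall x : S, e * x = x -> x * e = 0 -> x = 0.
  move=> x h1 h2; case: (eqVneq x 0) => [//|/eqP nz].
  have [y [z [cy cz ny nz' exy]]] := hess x nz.
  exfalso; apply: nz'.
  have Z1 : e * z = z by rewrite -exy mulrA h1.
  have Z2 : z * e = 0 by rewrite -exy -mulrA cy mulrA h2 mul0r.
  by rewrite -Z1 -cz Z2.
have key2 : forall x : S, f * x = x -> x * f = 0 -> x = 0.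
  move=> x h1 h2; case: (eqVneq x 0) => [//|/eqP nz].
  have [y [z [cy cz ny nz' exy]]] := hess x nz.
  exfalso; apply: nz'.
  have Z1 : f * z = z by rewrite -exy mulrA h1.
  have Z2 : z * f = 0 by rewrite -exy -mulrA cy mulrA h2 mul0r.
  by rewrite -Z1 -cz Z2.
move=> s.
have A : e * s * f = 0.
  apply: key; first by rewrite !mulrA he.
  by rewrite -!mulrA fe0 !mulr0.
have B : f * s * e = 0.
  apply: key2; first by rewrite !mulrA hf.
  by rewrite -!mulrA ef0 !mulr0.
have E1 : e * s = e * s * e.
  by rewrite -{1}(mulr1 (e * s)) -hef mulrDr A addr0.
have E2 : s * e = e * s * e.
  by rewrite -{1}(mul1r s) -hef mulrDl mulrDl B addr0.
by rewrite E1 E2.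
Qed.
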